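(* Let $(V,\omega)$ be a nondegenerate simple CFT type vertex operator algebra generated by $V_1$ and satisfying condition (T). If $\tilde\omega\in\operatorname{Sc}(V,\omega)$ with $\tilde\omega\ne0$ and $\tilde\omega\ne\omega$, then $\dim C_V(C_V(\langle\tilde\omega\rangle))_1>0$ and $\dim C_V(\langle\tilde\omega\rangle)_1>0$.
   Context: Nondegenerate simple CFT type: $V$ simple, $V=\bigoplus_{n\ge0}V_n$, $V_0=\mathbb C\mathbf 1$, and the form $u_1v=\langle u,v\rangle\mathbf 1$ on $V_1$ is nondegenerate. Semi-conformal vector of $(V,\omega)$: conformal vector $\tilde\omega$ of a vertex operator subalgebra $(U,\tilde\omega)$ with $\omega_n|_U=\tilde\omega_n|_U$ for $n\ge0$; $\operatorname{Sc}(V,\omega)$ is the set of these. $C_V(U)=\{v:u_nv=0\ \forall u\in U,n\ge0\}$ (graded, with weight-one part $C_V(U)_1$); $\langle\tilde\omega\rangle$ is the vertex subalgebra generated by $\tilde\omega$. Condition (T): for every $\tilde\omega\in\operatorname{Sc}(V,\omega)$, the natural map $C_V(C_V(\langle\tilde\omega\rangle))\otimes C_V(\langle\tilde\omega\rangle)\to V$, $u\otimes v\mapsto u_{-1}v$, is an isomorphism of vertex operator algebras. *)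

(* Defs.v *)
From HB Require Import structures.
From mathcomp Require Import all_boot all_order all_algebra.
Set Implicit Arguments. Unset Strict Implicit. Unset Printing Implicit Defensive.
Import Order.TTheory GRing.Theory Num.Theory.
Local Open Scope ring_scope.

Section VOA.
Variable F : fieldType.
Variable V : lmodType F.
(* Y n u v  is the n-th product  u_n v  (Y(u,z) = sum_n u_n z^{-n-1}). *)
Variable Y : int -> V -> V -> V.
Variable vac : V.

Definition binz (p : int) (i : nat) : F :=
  (\prod_(j < i) (p%:~R - j%:R)) / (i`!)%:R.

Definition va_bilinear : Prop :=
  (forall n a u u' v, Y n (a *: u + u') v = a *: Y n u v + Y n u' v) /\
  (forall n a u v v', Y n u (a *: v + v') = a *: Y n u v + Y n u v').

Definition va_truncation : Prop :=
  forall u v, exists N : nat, forall n : int, (N%:Z <= n)%R -> Y n u v = 0.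

Definition va_vacuum : Prop :=
  (forall (n : int) v, Y n vac v = if n == -1 then v else 0) /\
  (forall u, Y (-1) u vac = u) /\
  (forall u (n : nat), Y n%:Z u vac = 0).

(* Borcherds (Jacobi) identity; all sums are finite by truncation, so it is
   stated for all sufficiently large summation bounds. *)
Definition va_borcherds : Prop :=
  forall (u v w : V) (p q r : int), exists N : nat, forall M : nat, (N <= M)%N ->
    \sum_(i < M) binz p i *: Y (p + q - i%:Z) (Y (r + i%:Z) u v) w =
    \sum_(i < M) ((-1) ^+ i) *:
       (binz r i *: (Y (p + r - i%:Z) u (Y (q + i%:Z) v w)
        - ((-1) ^+ `|r|%N) *: Y (q + r - i%:Z) v (Y (p + i%:Z) u w))).

Definition is_VA : Prop :=
  [/\ va_bilinear, va_truncation, va_vacuum & va_borcherds].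

Definition Dop (u : V) : V := Y (-2) u vac.

(* finite-dimensionality of a subset: contained in the span of a finite list *)
Definition in_span (s : seq V) (v : V) : Prop :=
  exists c : 'I_(size s) -> F, v = \sum_(i < size s) c i *: s`_i.

Definition subspace (S : V -> Prop) : Prop :=
  [/\ S 0, (forall u v, S u -> S v -> S (u + v)) & (forall a u, S u -> S (a *: u))].

Definition is_subalg (S : V -> Prop) : Prop :=
  [/\ subspace S, S vac & forall u v (n : int), S u -> S v -> S (Y n u v)].

Definition is_ideal (I : V -> Prop) : Prop :=
  subspace I /\ forall u v (n : int), I v -> I (Y n u v) /\ I (Y n v u).

Definition wt (U : V -> Prop) (w : V) (n : int) (u : V) : Prop :=
  U u /\ Y 1 w u = n%:~R *: u.

(* w is a conformal vector making the vertex subalgebra U a vertex operator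
   algebra: Virasoro relations with some central charge, L(-1) = D on U,
   U = (+)_n U_n with L(0) = w_1 grading, dim U_n finite, U_n = 0 for n << 0. *)
Definition is_conformal (U : V -> Prop) (w : V) : Prop :=
  [/\ U w,
      (exists c : F, [/\ Y 3 w w = (c / 2%:R) *: vac, Y 2 w w = 0,
                         Y 1 w w = 2%:R *: w, Y 0 w w = Dop w &
                         forall n : nat, Y (n%:Z + 4) w w = 0]),
      (forall u, U u -> Y 0 w u = Dop u),
      (forall u, U u -> exists (m : int) (N : nat) (f : 'I_N -> V),
           (forall i : 'I_N, wt U w (m + (nat_of_ord i)%:Z) (f i)) /\ u = \sum_(i < N) f i) &
      ((forall n, exists s : seq V, forall u, wt U w n u -> in_span s u) /\
      (exists n0 : int, forall n u, (n < n0)%R -> wt U w n u -> u = 0))].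

Definition full (_ : V) : Prop := True.

Definition is_VOA (om : V) : Prop := is_VA /\ is_conformal full om.

Definition Vwt (om : V) (n : int) (u : V) : Prop := Y 1 om u = n%:~R *: u.

Definition CFT_type (om : V) : Prop :=
  (forall n u, (n < 0)%R -> Vwt om n u -> u = 0) /\
  (forall u, Vwt om 0 u -> exists a : F, u = a *: vac).

(* the form u_1 v = <u,v> 1 on V_1 is nondegenerate *)
Definition nondeg_form (om : V) : Prop :=
  forall u, Vwt om 1 u -> (forall v, Vwt om 1 v -> Y 1 u v = 0) -> u = 0.

Definition simple : Prop :=
  vac <> 0 /\
  forall I, is_ideal I -> (forall v, I v -> v = 0) \/ (forall v, I v).

Definition generated_by_V1 (om : V) : Prop :=
  forall S, is_subalg S -> (forall v, Vwt om 1 v -> S v) -> forall v, S v.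

Definition gen (w : V) (v : V) : Prop :=
  forall S, is_subalg S -> S w -> S v.

Definition commutant (U : V -> Prop) (v : V) : Prop :=
  forall u, U u -> forall n : nat, Y n%:Z u v = 0.

Definition semiconformal (om w : V) : Prop :=
  exists U : V -> Prop, [/\ is_subalg U, is_conformal U w &
    forall u (n : nat), U u -> Y n%:Z om u = Y n%:Z w u].

(* The map A (x) B -> V, a (x) b |-> a_{-1} b, is an isomorphism of vertex
   operator algebras (A, wA) (x) (B, wB) ~ (V, om), written without the
   (unavailable) tensor product of infinite-dimensional spaces. *)
Definition tensor_iso (om : V) (A B : V -> Prop) : Prop :=
  [/\ (* A and B are VOAs whose tensor-product conformal vector maps to om *)
      (exists wA wB, [/\ is_subalg A, is_subalg B, is_conformal A wA,
                        is_conformal B wB & om = Y (-1) wA vac + Y (-1) vac wB]),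
      (* vertex algebra homomorphism:
         phi((a(x)b)_n (a'(x)b')) = sum_{i in Z} (a_i a')_{-1} (b_{n-1-i} b') *)
      (forall a a' b b' (n : int), A a -> A a' -> B b -> B b' ->
         exists N : nat, forall M : nat, (N <= M)%N ->
           Y n (Y (-1) a b) (Y (-1) a' b') =
           \sum_(k < (M + M).+1)
              Y (-1) (Y (k%:Z - M%:Z) a a') (Y (n - 1 - (k%:Z - M%:Z)) b b')),
      (forall v, exists (N : nat) (a b : 'I_N -> V),
          (forall i, A (a i) /\ B (b i)) /\ v = \sum_(i < N) Y (-1) (a i) (b i)) &
      (* injective on A (x) B *)
      (forall (N : nat) (a b : 'I_N -> V), (forall i, A (a i) /\ B (b i)) ->
          (forall c : 'I_N -> F, \sum_(i < N) c i *: a i = 0 -> forall i, c i = 0) ->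
          \sum_(i < N) Y (-1) (a i) (b i) = 0 -> forall i, b i = 0)].

Definition condition_T (om : V) : Prop :=
  forall w, semiconformal om w ->
    tensor_iso om (commutant (commutant (gen w))) (commutant (gen w)).

End VOA.

(* Main.v *)
Require Import Defs.
From HB Require Import structures.
From mathcomp Require Import all_boot all_order all_algebra zify.
From Stdlib Require Import Classical.
Import Order.TTheory GRing.Theory Num.Theory.
Local Open Scope ring_scope.
Set Implicit Arguments. Unset Strict Implicit.

Lemma Y0l (F : fieldType) (V : lmodType F) (Y : int -> V -> V -> V) :
  va_bilinear Y -> forall n v, Y n 0 v = 0.
Proof.
case=> hl _ n v; have := hl n 1 0 0 v; rewrite !scale1r addr0 => e.
by apply: (@addrI _ (Y n 0 v)); rewrite addr0 -e.
Qed.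

Lemma Y0r (F : fieldType) (V : lmodType F) (Y : int -> V -> V -> V) :
  va_bilinear Y -> forall n u, Y n u 0 = 0.
Proof.
case=> _ hr n u; have := hr n 1 u 0 0; rewrite !scale1r addr0 => e.
by apply: (@addrI _ (Y n u 0)); rewrite addr0 -e.
Qed.

Lemma YDl (F : fieldType) (V : lmodType F) (Y : int -> V -> V -> V) :
  va_bilinear Y -> forall n u u' v, Y n (u + u') v = Y n u v + Y n u' v.
Proof. by case=> hl _ n u u' v; have := hl n 1 u u' v; rewrite !scale1r. Qed.

Lemma YDr (F : fieldType) (V : lmodType F) (Y : int -> V -> V -> V) :
  va_bilinear Y -> forall n u v v', Y n u (v + v') = Y n u v + Y n u v'.
Proof. by case=> _ hr n u v v'; have := hr n 1 u v v'; rewrite !scale1r. Qed.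

Lemma YZl (F : fieldType) (V : lmodType F) (Y : int -> V -> V -> V) :
  va_bilinear Y -> forall n a u v, Y n (a *: u) v = a *: Y n u v.
Proof. by move=> h n a u v; case: (h) => hl _; rewrite -[a *: u]addr0 hl Y0l // addr0. Qed.

Lemma YZr (F : fieldType) (V : lmodType F) (Y : int -> V -> V -> V) :
  va_bilinear Y -> forall n a u v, Y n u (a *: v) = a *: Y n u v.
Proof. by move=> h n a u v; case: (h) => _ hr; rewrite -[a *: v]addr0 hr Y0r // addr0. Qed.

Lemma YBl (F : fieldType) (V : lmodType F) (Y : int -> V -> V -> V) :
  va_bilinear Y -> forall n u u' v, Y n (u - u') v = Y n u v - Y n u' v.
Proof. by move=> h n u u' v; rewrite YDl // -scaleN1r YZl // scaleN1r. Qed.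

Lemma YBr (F : fieldType) (V : lmodType F) (Y : int -> V -> V -> V) :
  va_bilinear Y -> forall n u v v', Y n u (v - v') = Y n u v - Y n u v'.
Proof. by move=> h n u v v'; rewrite YDr // -scaleN1r YZr // scaleN1r. Qed.

Lemma Ysuml (F : fieldType) (V : lmodType F) (Y : int -> V -> V -> V) :
  va_bilinear Y -> forall n v (I : Type) (r : seq I) (P : pred I) (f : I -> V),
  Y n (\sum_(i <- r | P i) f i) v = \sum_(i <- r | P i) Y n (f i) v.
Proof.
move=> h n v I r P f.
exact: (big_morph (fun x => Y n x v) (fun x y => YDl h n x y v) (Y0l h n v)).
Qed.

Lemma Ysumr (F : fieldType) (V : lmodType F) (Y : int -> V -> V -> V) :
  va_bilinear Y -> forall n u (I : Type) (r : seq I) (P : pred I) (f : I -> V),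
  Y n u (\sum_(i <- r | P i) f i) = \sum_(i <- r | P i) Y n u (f i).
Proof.
move=> h n u I r P f.
exact: (big_morph (fun x => Y n u x) (YDr h n u) (Y0r h n u)).
Qed.


Lemma eig0 (F : fieldType) (V : lmodType F) (f : V -> V)
  (hf : forall a u u', f (a *: u + u') = a *: f u + f u') (lam : F) :
  forall (s : seq (F * V)),
  (forall p, p \in s -> f p.2 = p.1 *: p.2 /\ p.1 != lam) ->
  f (\sum_(p <- s) p.2) = lam *: \sum_(p <- s) p.2 -> \sum_(p <- s) p.2 = 0.
Proof.
have f0 : f 0 = 0.
  have := hf 1 0 0; rewrite !scale1r addr0 => e.
  by apply: (@addrI _ (f 0)); rewrite addr0 -e.
have fD : forall u u', f (u + u') = f u + f u'.
  by move=> u u'; have := hf 1 u u'; rewrite !scale1r.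
have fZ : forall a u, f (a *: u) = a *: f u.
  by move=> a u; have := hf a u 0; rewrite !addr0 f0 addr0.
have fS : forall (s : seq (F * V)) (g : F * V -> V),
    f (\sum_(p <- s) g p) = \sum_(p <- s) f (g p).
  by move=> s g; apply: (big_morph f fD f0).
move=> s; have [n] := ubnP (size s); elim: n s => // n IH [|[k y] s0] /= hs hall hz.
  by rewrite big_nil.
have [fy hk] := hall (k, y) (mem_head _ _).
have hall0 : forall p, p \in s0 -> f p.2 = p.1 *: p.2 /\ p.1 != lam.
  by move=> p hp; apply: hall; rewrite in_cons hp orbT.
move: hz; rewrite big_cons /= => hz.
set z := y + _ in hz *.
pose s' := [seq (p.1, (p.1 - k) *: p.2) | p <- s0].
have hs' : \sum_(p <- s') p.2 = (lam - k) *: z.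
  rewrite big_map /= scalerBl -hz /z fD fS fy scalerDr.
  rewrite (big_morph (fun x => k *: x) (scalerDr k) (scaler0 _ k)).
  rewrite opprD addrACA subrr add0r -sumrB.
  by apply: eq_big_seq => p hp; have [-> _] := hall0 p hp; rewrite scalerBl.
have : \sum_(p <- s') p.2 = 0.
  have h3 : f (\sum_(p <- s') p.2) = lam *: \sum_(p <- s') p.2.
    by rewrite hs' fZ hz !scalerA mulrC.
  apply: IH h3.
  - by rewrite size_map.
  - move=> p /mapP [q hq ->] /=; have [fq hq1] := hall0 q hq.
    by split=> //; rewrite fZ fq !scalerA mulrC.
move=> h0; move: hs'; rewrite h0 => /esym/eqP; rewrite scaler_eq0 subr_eq0 eq_sym (negbTE hk) /=.
by move/eqP.
Qed.


Lemma term_wt (F : fieldType) (V : lmodType F) (Y : int -> V -> V -> V) (vac : V)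
  (hbil : va_bilinear Y) (hvac : va_vacuum Y vac) (A B : V -> Prop) (wA wB : V)
  (hAv : A vac) (hBv : B vac) (hwA : A wA) (hwB : B wB)
  (hhom : forall a a' b b' (n : int), A a -> A a' -> B b -> B b' ->
         exists N : nat, forall M : nat, (N <= M)%N ->
           Y n (Y (-1) a b) (Y (-1) a' b') =
           \sum_(k < (M + M).+1)
              Y (-1) (Y (k%:Z - M%:Z) a a') (Y (n - 1 - (k%:Z - M%:Z)) b b'))
  a b (ha : A a) (hb : B b) :
  Y 1 (Y (-1) wA vac + Y (-1) vac wB) (Y (-1) a b) =
  Y (-1) (Y 1 wA a) b + Y (-1) a (Y 1 wB b).
Proof.
case: hvac => hv1 _.
rewrite YDl //; congr (_ + _).
  have [N hN] := hhom wA a vac b 1 hwA ha hBv hb.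
  pose M := maxn N 1.
  rewrite (hN M (leq_maxl _ _)).
  have hM : (M.+1 < (M + M).+1)%N by rewrite /M; lia.
  rewrite (bigD1 (Ordinal hM)) //= big1 ?addr0.
    have -> : (M.+1%:Z - M%:Z) = 1 by lia.
    by rewrite hv1.
  move=> k hk; rewrite hv1; case: ifP => [/eqP e|_]; last by rewrite Y0r.
  exfalso; move/eqP: hk; apply; apply/val_inj => /=; lia.
have [N hN] := hhom vac a wB b 1 hAv ha hwB hb.
pose M := maxn N 1.
rewrite (hN M (leq_maxl _ _)).
have hM : (M.-1 < (M + M).+1)%N by rewrite /M; lia.
rewrite (bigD1 (Ordinal hM)) //= big1 ?addr0.
  have -> : (M.-1%:Z - M%:Z) = -1 by rewrite /M; lia.
  by rewrite hv1 /=; congr (Y _ _ (Y _ _ _)).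
move=> k hk; rewrite hv1; case: ifP => [/eqP e|_]; last by rewrite Y0l.
exfalso; move/eqP: hk; apply; apply/val_inj => /=; rewrite /M in e *; lia.
Qed.


Lemma decomp (F : numClosedFieldType) (V : lmodType F) (Y : int -> V -> V -> V) (vac om : V)
  (hbil : va_bilinear Y) (hvac : va_vacuum Y vac) (hCFT : CFT_type Y vac om)
  (A B : V -> Prop) (wA wB : V)
  (hA : is_subalg Y vac A) (hB : is_subalg Y vac B)
  (hcA : is_conformal Y vac A wA) (hcB : is_conformal Y vac B wB)
  (hom : om = Y (-1) wA vac + Y (-1) vac wB)
  (hhom : forall a a' b b' (n : int), A a -> A a' -> B b -> B b' ->
         exists N : nat, forall M : nat, (N <= M)%N ->
           Y n (Y (-1) a b) (Y (-1) a' b') =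
           \sum_(k < (M + M).+1)
              Y (-1) (Y (k%:Z - M%:Z) a a') (Y (n - 1 - (k%:Z - M%:Z)) b b'))
  (hsurj : forall v, exists (N : nat) (a b : 'I_N -> V),
          (forall i, A (a i) /\ B (b i)) /\ v = \sum_(i < N) Y (-1) (a i) (b i))
  (v : V) :
  exists s : seq (F * V),
    (forall p, p \in s -> Y 1 om p.2 = p.1 *: p.2 /\ (p.1 = 1 -> A p.2 \/ B p.2)) /\
    v = \sum_(p <- s) p.2.
Proof.
case: (hvac) => hv1 [hv2 hv3].
case: hA => [[hA0 hAD hAZ] hAv hAY]; case: hB => [[hB0 hBD hBZ] hBv hBY].
case: hcA => hwA _ _ hdA _; case: hcB => hwB _ _ hdB _.
pose G x := exists s : seq (F * V),
    (forall p, p \in s -> Y 1 om p.2 = p.1 *: p.2 /\ (p.1 = 1 -> A p.2 \/ B p.2)) /\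
    x = \sum_(p <- s) p.2.
have G0 : G 0 by exists [::]; split=> //; rewrite big_nil.
have GD : forall x y, G x -> G y -> G (x + y).
  move=> x y [s1 [h1 ->]] [s2 [h2 ->]]; exists (s1 ++ s2); split; last by rewrite big_cat.
  by move=> p; rewrite mem_cat => /orP [/h1|/h2].
have GS : forall (I : Type) (r : seq I) (f : I -> V), (forall i, G (f i)) ->
    G (\sum_(i <- r) f i).
  by move=> I r f hf; apply: big_ind => // i _; apply: hf.
have TW : forall a b, A a -> B b -> Y 1 om (Y (-1) a b) = Y (-1) (Y 1 wA a) b + Y (-1) a (Y 1 wB b).
  by move=> a b ha hb; rewrite hom; apply: (term_wt hbil hvac hAv hBv hwA hwB hhom ha hb).
have wBv : Y 1 wB vac = 0 by apply: (hv3 wB 1%N).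
have wAv : Y 1 wA vac = 0 by apply: (hv3 wA 1%N).
have Y1v : forall b, Y (-1) vac b = b by move=> b; rewrite hv1.
have G1 : forall a b (al be : int), A a -> B b -> Y 1 wA a = al%:~R *: a ->
    Y 1 wB b = be%:~R *: b -> G (Y (-1) a b).
  move=> a b al be ha hb hal hbe.
  have wa : Y 1 om a = al%:~R *: a.
    by rewrite -{1}(hv2 a) TW // wBv Y0r // addr0 hal YZl // hv2.
  have wb : Y 1 om b = be%:~R *: b.
    by rewrite -{1}(Y1v b) TW // wAv Y0l // add0r hbe YZr // Y1v.
  exists [:: ((al + be)%:~R, Y (-1) a b)]; split; last by rewrite big_cons big_nil addr0.
  move=> p; rewrite mem_seq1 => /eqP -> /=; split.
    by rewrite TW // hal hbe YZl // YZr // intrD scalerDl.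
  move=> e; have {}e : al + be = 1 by apply: (@intr_inj F); rewrite e.
  case: (ltrP al 0) => hal0.
    by right; rewrite (hCFT.1 al a hal0 wa) Y0l.
  case: (ltrP be 0) => hbe0.
    by right; rewrite (hCFT.1 be b hbe0 wb) Y0r.
  have [ea|eb] : al = 0 \/ be = 0 by lia.
    right; move: wa; rewrite ea => /(hCFT.2 a) [c ->].
    by rewrite YZl // Y1v; apply: hBZ.
  left; move: wb; rewrite eb => /(hCFT.2 b) [c ->].
  by rewrite YZr // hv2; apply: hAZ.
have [N [a [b [hab ->]]]] := hsurj v.
apply: (GS) => i; case: (hab i) => ha hb.
have [m [Na [fa [hfa ea]]]] := hdA _ ha.
have [m' [Nb [fb [hfb eb]]]] := hdB _ hb.
rewrite ea eb Ysuml //; apply: (GS) => j; rewrite Ysumr //; apply: (GS) => k.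
case: (hfa j) => h1 h2; case: (hfb k) => h3 h4.
exact: G1 h1 h3 h2 h4.
Qed.


Lemma binz00 (F : fieldType) : binz F 0 0 = 1.
Proof. by rewrite /binz big_ord0 fact0 divr1. Qed.

Lemma binz0S (F : fieldType) i : binz F 0 i.+1 = 0.
Proof. by rewrite /binz big_ord_recl /= subrr mul0r mul0r. Qed.

Lemma binzn0 (F : fieldType) n : binz F n 0 = 1.
Proof. by rewrite /binz big_ord0 fact0 divr1. Qed.

Lemma bor_prod (F : fieldType) (V : lmodType F) (Y : int -> V -> V -> V) (vac : V)
  (hbil : va_bilinear Y) (hb : va_borcherds Y) (x u v : V) (m : int) :
  (forall n : nat, Y n%:Z u x = 0) -> (forall n : nat, Y n%:Z v x = 0) ->
  forall n : nat, Y n%:Z (Y m u v) x = 0.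
Proof.
move=> hu hv n.
have [N hN] := hb u v x 0 n%:Z m.
have := hN N.+1 (leqnSn N).
rewrite big_ord_recl big1; last first.
  by move=> i _; rewrite binz0S scale0r.
rewrite addr0 binz00 scale1r.
have -> : (0 + n%:Z - (nat_of_ord (@ord0 N))%:Z) = n%:Z by rewrite /=; lia.
have -> : (m + (nat_of_ord (@ord0 N))%:Z) = m by rewrite /=; lia.
move=> ->; apply: big1 => i _.
rewrite -PoszD hv Y0r // add0r hu Y0r //.
by rewrite !scaler0 oppr0 !scaler0.
Qed.

Lemma bor_skew (F : fieldType) (V : lmodType F) (Y : int -> V -> V -> V) (vac : V)
  (hbil : va_bilinear Y) (hvac : va_vacuum Y vac) (hb : va_borcherds Y) (u v : V) (n : nat) :
  exists N : nat, forall M : nat, (N <= M)%N ->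
  \sum_(i < M.+1) binz F (-1) i *: Y (-1 + 0 - i%:Z) (Y (n%:Z + i%:Z) u v) vac =
  - ((-1) ^+ `|n%:Z|%N *: Y n%:Z v u).
Proof.
case: hvac => hv1 [hv2 hv3].
have [N hN] := hb u v vac (-1) 0 n%:Z.
exists N => M hM; rewrite (hN M.+1 (leqW hM)).
rewrite big_ord_recl big1; last first.
  move=> i _; rewrite add0r hv3 Y0r // sub0r.
  have -> : (-1 + (nat_of_ord (lift ord0 i))%:Z) = (nat_of_ord i)%:Z by rewrite lift0; lia.
  by rewrite hv3 Y0r // !scaler0 oppr0 !scaler0.
rewrite addr0 add0r hv3 Y0r // sub0r binzn0 expr0 !scale1r.
have -> : (-1 + (nat_of_ord (@ord0 M))%:Z) = -1 by rewrite /=; lia.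
have -> : (0 + n%:Z - (nat_of_ord (@ord0 M))%:Z) = n%:Z by rewrite /=; lia.
by rewrite hv2.
Qed.


Lemma v1_in (F : numClosedFieldType) (V : lmodType F) (Y : int -> V -> V -> V) (om : V)
  (hbil : va_bilinear Y) (A B : V -> Prop) (hB : subspace B)
  (hA0 : forall x, A x -> Vwt Y om 1 x -> x = 0) (v : V) (hv : Vwt Y om 1 v)
  (s : seq (F * V))
  (hs : forall p, p \in s -> Y 1 om p.2 = p.1 *: p.2 /\ (p.1 = 1 -> A p.2 \/ B p.2))
  (e : v = \sum_(p <- s) p.2) : B v.
Proof.
case: hB => hB0 hBD hBZ.
rewrite /Vwt /= in hv.
move: e; rewrite (bigID (fun p => p.1 == 1)) /= => e.
set z1 := \sum_(p <- s | _) _ in e; set z2 := \sum_(p <- s | _) _ in e.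
have fz1 : Y 1 om z1 = z1.
  rewrite /z1 Ysumr // big_seq_cond [RHS]big_seq_cond; apply: eq_bigr => p /andP [hp /eqP h1].
  by have [-> _] := hs p hp; rewrite h1 scale1r.
have hz2 : z2 = 0.
  rewrite /z2 -big_filter; apply: (@eig0 F V (Y 1 om) _ 1).
  - by move=> a u u'; case: hbil => _ ->.
  - move=> p; rewrite mem_filter => /andP [h1 hp]; split=> //.
    by have [-> _] := hs p hp.
  rewrite big_filter -/z2.
  have -> : z2 = v - z1 by rewrite e addrAC subrr add0r.
  by rewrite YBr // fz1 hv !scale1r.
rewrite e hz2 addr0 /z1 big_seq_cond; apply: big_ind => //.
move=> p /andP [hp /eqP h1]; have [fp hp1] := hs p hp.
case: (hp1 h1) => // hAp.
by rewrite (hA0 _ hAp) // /Vwt fp h1 !scale1r.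
Qed.

Unset Implicit Arguments.

Theorem lemma5p3 (F : numClosedFieldType) (V : lmodType F)
  (Y : int -> V -> V -> V) (vac om : V)
  (hVOA : is_VOA Y vac om)
  (hCFT : CFT_type Y vac om)
  (hnd : nondeg_form Y om)
  (hsimple : simple Y vac)
  (hgen : generated_by_V1 Y vac om)
  (hT : condition_T Y vac om)
  (w : V) (hw : semiconformal Y vac om w) (hw0 : w <> 0) (hwom : w <> om) :
  (exists v, [/\ v <> 0, Vwt Y om 1 v & commutant Y (commutant Y (gen Y vac w)) v]) /\
  (exists v, [/\ v <> 0, Vwt Y om 1 v & commutant Y (gen Y vac w) v]).
Proof.
case: hVOA => [[hbil htr hvac hbor] hcom].
case: (hvac) => hv1 [hv2 hv3].
case: hcom => _ [c [_ _ om11 _ _]] _ _ _.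
case: (hw) => U [hU hcU hUo]; case: hcU => hUw [c' [_ _ w11 _ _]] _ _ _.
have [[wA [wB [hA hB hcA hcB hom]]] hhom hsurj hinj] := hT w hw.
set A := commutant Y (commutant Y (gen Y vac w)) in hA hcA hhom hsurj hinj *.
set B := commutant Y (gen Y vac w) in hB hcB hhom hsurj hinj *.
have two0 : (2%:R : F) != 0 by rewrite pnatr_eq0.
have hdec := decomp hbil hvac hCFT hA hB hcA hcB hom hhom hsurj.
split.
  case: (classic (exists v, [/\ v <> 0, Vwt Y om 1 v & A v])) => // hn; exfalso.
  have hA0 : forall x, A x -> Vwt Y om 1 x -> x = 0.
    by move=> x hx hx1; apply: NNPP => hx0; apply: hn; exists x; split.
  have hBall : forall v, B v.
    apply: (hgen _ hB) => v hv; have [s [hs e]] := hdec v.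
    case: hB => hBs _ _.
    exact: (v1_in hbil hBs hA0 hv hs e).
  have := hBall w w (fun S _ h => h) 1%N.
  change (Y 1 w w = 0 -> False); rewrite w11 => /eqP; rewrite scaler_eq0 (negbTE two0) /=.
  by move/eqP.
case: (classic (exists v, [/\ v <> 0, Vwt Y om 1 v & B v])) => // hn; exfalso.
have hB0 : forall x, B x -> Vwt Y om 1 x -> x = 0.
  by move=> x hx hx1; apply: NNPP => hx0; apply: hn; exists x; split.
have hAall : forall v, A v.
  apply: (hgen _ hA) => v hv; have [s [hs e]] := hdec v.
  case: hA => hAs _ _.
  apply: (v1_in hbil hAs hB0 hv (s := s)) e.
  by move=> p hp; have [h1 h2] := hs p hp; split=> // /h2 [];[right|left].
pose x := om - w.
have Yx : Y 1 om x = 2%:R *: x.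
  by rewrite YBr // om11 (hUo w 1%N hUw) w11 scalerBr.
have hBx : B x.
  move=> u hu n.
  pose S := fun u => forall n : nat, Y n%:Z u x = 0.
  have hS : is_subalg Y vac S.
    split.
    - split.
      + by move=> k; rewrite Y0l.
      + by move=> u1 u2 h1 h2 k; rewrite YDl // h1 h2 addr0.
      + by move=> a u1 h1 k; rewrite YZl // h1 scaler0.
    - by move=> k; rewrite hv1.
    - by move=> u1 u2 m h1 h2; exact: (bor_prod vac hbil hbor m h1 h2).
  apply: (hu S hS).
  move=> k; rewrite YBr //; apply/eqP; rewrite subr_eq0; apply/eqP.
  have [N1 h1] := bor_skew hbil hvac hbor om w k.
  have [N2 h2] := bor_skew hbil hvac hbor w w k.
  pose M := maxn N1 N2.
  have e : \sum_(i < M.+1) binz F (-1) i *: Y (-1 + 0 - i%:Z) (Y (k%:Z + i%:Z) om w) vac =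
           \sum_(i < M.+1) binz F (-1) i *: Y (-1 + 0 - i%:Z) (Y (k%:Z + i%:Z) w w) vac.
    by apply: eq_bigr => i _; rewrite -PoszD (hUo w _ hUw).
  rewrite (h1 M (leq_maxl _ _)) (h2 M (leq_maxr _ _)) in e.
  move/oppr_inj: e => e.
  have := congr1 (fun z => ((-1) ^+ `|k%:Z|%N)^-1 *: z) e.
  by rewrite /= !scalerK // signr_eq0.
pose a := fun i : 'I_2 => if i == ord0 then x else vac.
pose b := fun i : 'I_2 => if i == ord0 then vac else - x.
have hab : forall i, A (a i) /\ B (b i).
  move=> i; rewrite /a /b; case: (i == ord0); split=> //.
  all: try by apply: hAall.
  case: hB => [[_ _ hBZ] hBv _]; rewrite -scaleN1r; exact: hBZ.
have hsum : \sum_(i < 2) Y (-1) (a i) (b i) = 0.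
  rewrite !big_ord_recl big_ord0 /a /b /=.
  by rewrite hv2 hv1 /= addr0 subrr.
case: (classic (forall c : 'I_2 -> F, \sum_(i < 2) c i *: a i = 0 -> forall i, c i = 0)) => hc.
  have := hinj 2 a b hab hc hsum ord0.
  by rewrite /b /=; apply: hsimple.1.
have [cc hcc] : exists cc : 'I_2 -> F, ~ (\sum_(i < 2) cc i *: a i = 0 -> forall i, cc i = 0).
  by apply: NNPP => hh; apply: hc => cc; apply: NNPP => hh'; apply: hh; exists cc.
have hsc : \sum_(i < 2) cc i *: a i = 0.
  by apply: NNPP => hh; apply: hcc => h; exfalso; apply: hh.
have [i0 hi0] : exists i, cc i <> 0.
  by apply: NNPP => hh; apply: hcc => _ i; apply: NNPP => hh'; apply: hh; exists i.
move: hsc; rewrite !big_ord_recl big_ord0 /a /= addr0 => hsc.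
have := congr1 (Y 1 om) hsc.
rewrite YDr // !YZr // Yx (hv3 om 1%N) scaler0 addr0 Y0r // scalerA => /eqP.
rewrite scaler_eq0 mulf_eq0 (negbTE two0) orbF => /orP [/eqP h0|/eqP hx0].
  move: hsc; rewrite h0 scale0r add0r => /eqP; rewrite scaler_eq0 => /orP [/eqP h1|/eqP].
    apply: hi0; case: i0 => [[|[|//]]] hi.
      by rewrite -h0; congr (cc _); apply: val_inj.
    by rewrite -h1; congr (cc _); apply: val_inj.
  exact: hsimple.1.
by apply: hwom; apply/esym/eqP; rewrite -subr_eq0 -/x hx0.
Qed.
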